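(* Let $n\geq 2$ be an integer. The ring $\mathrm{Mat}_n(\mathbb{Z})$ of $n\times n$ integer matrices has the presentation (as a unital associative ring) with two generators $x,y$ and three relations $$\mathrm{Mat}_n(\mathbb{Z}) \cong \langle x,y \mid x^n = 0,\ y^n=0,\ xy + y^{n-1}x^{n-1} = 1 \rangle.$$ That is, the quotient of the free unital associative ring $\mathbb{Z}\langle x,y\rangle$ by the two-sided ideal generated by $x^n$, $y^n$ and $xy + y^{n-1}x^{n-1} - 1$ is isomorphic to $\mathrm{Mat}_n(\mathbb{Z})$.
   Context: All rings are associative with unit, and presentations are taken in the category of unital associative rings. *)

(* Defs.v *)
From HB Require Import structures.
From mathcomp Require Import all_boot all_order all_algebra.
Set Implicit Arguments. Unset Strict Implicit. Unset Printing Implicit Defensive.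
Import GRing.Theory.
Local Open Scope ring_scope.

Definition mat_rels (R : pzRingType) (n : nat) (x y : R) : Prop :=
  [/\ x ^+ n = 0, y ^+ n = 0 & x * y + y ^+ n.-1 * x ^+ n.-1 = 1].

(* This is the
   universal property characterizing  Z<x,y> / (x^n, y^n, xy + y^(n-1)x^(n-1) - 1)
   (via x |-> X, y |-> Y) up to isomorphism. *)
Definition presented_by (A : pzRingType) (n : nat) (X Y : A) : Prop :=
  @mat_rels _ n X Y /\
  forall (R : pzRingType) (a b : R), @mat_rels _ n a b ->
    (exists f : {rmorphism A -> R}, f X = a /\ f Y = b) /\
    (forall f g : {rmorphism A -> R},
        f X = a -> f Y = b -> g X = a -> g Y = b -> f =1 g).

(* Main.v *)
Require Import Defs.
From HB Require Import structures.
From mathcomp Require Import all_boot all_order all_algebra.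
From mathcomp Require Import zify.
Set Implicit Arguments. Unset Strict Implicit. Unset Printing Implicit Defensive.
Import GRing.Theory.
Local Open Scope ring_scope.

Section Abs.
Variables (R : pzRingType) (m : nat) (a b : R).
Hypotheses (ha : a ^+ m.+1 = 0) (hb : b ^+ m.+1 = 0)
  (hab : a * b + b ^+ m * a ^+ m = 1).

Definition pp := b ^+ m * a ^+ m.
Lemma pa : pp * a = 0. Proof. by rewrite /pp -mulrA -exprSr ha mulr0. Qed.
Lemma bp : b * pp = 0. Proof. by rewrite /pp mulrA -exprS hb mul0r. Qed.
Lemma ab1 : a * b = 1 - pp. Proof. by rewrite -hab addrK. Qed.
Definition ee (i j : nat) := a ^+ i * pp * b ^+ j.
Definition ss k := \sum_(i < k) ee i i.

Lemma abk k : a ^+ k * b ^+ k = 1 - ss k.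
Proof.
elim: k => [|k IH]; first by rewrite !expr0 mulr1 /ss big_ord0 subr0.
rewrite exprSr exprS mulrA -(mulrA _ a) ab1 mulrBr mulr1 mulrBl -mulrA IH.
by rewrite /ss big_ord_recr /= /ee opprD addrA mulrA.
Qed.

Lemma sn : ss m.+1 = 1.
Proof. by apply/esym/subr0_eq; rewrite -abk ha mul0r. Qed.

Lemma L6 i : (i <= m)%N -> b ^+ i * a ^+ i * pp = pp.
Proof.
elim/ltn_ind: i => i IH him.
have H0 : b ^+ i * ss i = 0.
  rewrite /ss mulr_sumr big1 // => [[l hl]] _ /=.
  have -> : b ^+ i * ee l l = b ^+ (i - l).-1 * (b * (b ^+ l * a ^+ l * pp)) * b ^+ l.
    by rewrite /ee !mulrA -exprSr -exprD prednK ?subn_gt0 // subnK ?(ltnW hl).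
  by rewrite IH ?(leq_trans (ltnW hl)) // bp mulr0 mul0r.
have hbm : b ^+ m = b ^+ i * b ^+ (m - i) by rewrite -exprD subnKC.
rewrite [in LHS]/pp hbm !mulrA -(mulrA _ (a ^+ i)) abk mulrBr mulr1 mulrBl H0 !mul0r subr0.
by rewrite /pp hbm.
Qed.

Lemma L7 i : (i <= m)%N -> pp * b ^+ i * a ^+ i = pp.
Proof.
elim/ltn_ind: i => i IH him.
have H0 : ss i * a ^+ i = 0.
  rewrite /ss mulr_suml big1 // => [[l hl]] _ /=.
  have -> : ee l l * a ^+ i = a ^+ l * (pp * b ^+ l * a ^+ l) * (a * a ^+ (i - l).-1).
    by rewrite /ee -exprS prednK ?subn_gt0 // !mulrA -!mulrA -exprD subnKC ?(ltnW hl).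
  by rewrite IH ?(leq_trans (ltnW hl)) // (mulrA (a ^+ l * pp) a) -(mulrA (a ^+ l)) pa mulr0 mul0r.
have ham : a ^+ m = a ^+ (m - i) * a ^+ i by rewrite -exprD subnK.
rewrite [in LHS]/pp ham -!mulrA (mulrA (a ^+ i)) abk mulrBl mul1r H0 subr0.
by rewrite /pp ham !mulrA.
Qed.

Lemma ppp : pp * pp = pp.
Proof. by rewrite {2}/pp mulrA L7. Qed.

Lemma L8 j k : (j <= m)%N -> (k <= m)%N ->
  pp * b ^+ j * a ^+ k * pp = if j == k then pp else 0.
Proof.
move=> hj hk; case: (leqP j k) => hjk.
  have -> : a ^+ k = a ^+ j * a ^+ (k - j) by rewrite -exprD subnKC.
  rewrite mulrA L7 //; case: eqP => [->|/eqP hne]; first by rewrite subnn expr0 mulr1 ppp.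
  have hp : (0 < k - j)%N by rewrite subn_gt0 ltn_neqAle hne hjk.
  by rewrite -(prednK hp) exprS mulrA pa mul0r mul0r.
have -> : b ^+ j = b ^+ (j - k) * b ^+ k by rewrite -exprD subnK // ltnW.
rewrite (gtn_eqF hjk) mulrA -!mulrA (mulrA (b ^+ k)) L6 //.
have hp : (0 < j - k)%N by rewrite subn_gt0.
by rewrite -(prednK hp) exprSr -mulrA bp !mulr0.
Qed.

Lemma emul i j k l : (j <= m)%N -> (k <= m)%N ->
  ee i j * ee k l = if j == k then ee i l else 0.
Proof.
move=> hj hk; have -> : ee i j * ee k l = a ^+ i * (pp * b ^+ j * a ^+ k * pp) * b ^+ l.
  by rewrite /ee !mulrA.
by rewrite L8 //; case: eqP; rewrite ?mulr0 ?mul0r.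
Qed.

Lemma ordle (j : 'I_m.+1) : (j <= m)%N. Proof. exact: ltn_ord j. Qed.

Definition fm (M : 'M[int]_m.+1) : R := \sum_(i < m.+1) \sum_(j < m.+1) ee i j *~ M i j.

Lemma fm_zmod : zmod_morphism fm.
Proof.
move=> M N; rewrite /fm -sumrB; apply: eq_bigr => i _.
by rewrite -sumrB; apply: eq_bigr => j _; rewrite !mxE mulrzBr.
Qed.

Lemma fm1 : fm 1 = 1.
Proof.
rewrite /fm -sn /ss; apply: eq_bigr => i _.
rewrite (bigD1 i) //= big1 ?addr0 => [|j hj]; rewrite !mxE.
  by case: eqP => // _; rewrite mulr1z.
by rewrite eq_sym (negbTE hj) mulr0z.
Qed.

Lemma fmM M N : fm (M * N) = fm M * fm N.
Proof.
rewrite /fm mulr_suml; apply: eq_bigr => i _.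
rewrite mulr_suml.
transitivity (\sum_(j < m.+1) \sum_(l < m.+1) ee i l *~ (M i j * N j l)).
  rewrite exchange_big; apply: eq_bigr => l _.
  by rewrite -mulmxE !mxE mulrz_sumr.
apply: eq_bigr => j _; symmetry; rewrite mulr_sumr (bigD1 j) //= [X in _ + X]big1 ?addr0 => [|k hk].
  rewrite mulr_sumr; apply: eq_bigr => l _.
  by rewrite mulrzAl mulrzAr emul ?ordle // eqxx -mulrzA [N _ _ * _]mulrC.
rewrite mulr_sumr big1 // => l _.
rewrite mulrzAl mulrzAr emul ?ordle //.
have -> : (j == k :> nat) = false by rewrite eq_sym; exact: negbTE hk.
by rewrite !mul0rz.
Qed.


Lemma ssm : ss m = 1 - ee m m.
Proof. by rewrite -sn /ss big_ord_recr /= addrK. Qed.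

Lemma a_ss : a * ss m = a.
Proof. by rewrite ssm mulrBr mulr1 /ee !mulrA -exprS ha !mul0r subr0. Qed.

Lemma ss_b : ss m * b = b.
Proof. by rewrite ssm mulrBl mul1r /ee -!mulrA -exprSr hb !mulr0 subr0. Qed.

Lemma zb (x : R) (c : bool) : x *~ (c%:R) = if c then x else 0.
Proof. by rewrite mulrz_nat mulrb. Qed.

Definition Xm : 'M[int]_m.+1 := \matrix_(i, j) ((i : nat) == j.+1)%:R.
Definition Ym : 'M[int]_m.+1 := \matrix_(i, j) ((j : nat) == i.+1)%:R.

Lemma fmX : fm Xm = a.
Proof.
rewrite /fm exchange_big /=.
transitivity (\sum_(j < m.+1) (if (j.+1 < m.+1)%N then ee j.+1 j else 0)).
  apply: eq_bigr => j _.
  rewrite -(@big_ord1_eq _ 0 +%R (fun i => ee i j)).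
  by rewrite [RHS]big_mkcond; apply: eq_bigr => i _; rewrite mxE zb.
rewrite big_ord_recr /= ltnn addr0 -[RHS]a_ss /ss mulr_sumr.
by apply: eq_bigr => j _; rewrite ltnS ltn_ord /ee !mulrA -exprS.
Qed.

Lemma fmY : fm Ym = b.
Proof.
rewrite /fm.
transitivity (\sum_(i < m.+1) (if (i.+1 < m.+1)%N then ee i i.+1 else 0)).
  apply: eq_bigr => i _.
  rewrite -(@big_ord1_eq _ 0 +%R (fun j => ee i j)) [RHS]big_mkcond /=.
  by apply: eq_bigr => j _; rewrite mxE zb.
rewrite big_ord_recr /= ltnn addr0 -[RHS]ss_b /ss mulr_suml.
by apply: eq_bigr => j _; rewrite ltnS ltn_ord /ee -!mulrA -exprSr.
Qed.

End Abs.

Lemma mulb_r (x : int) (c : bool) : x * c%:R = if c then x else 0.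
Proof. by rewrite mulr_natr mulrb. Qed.

Lemma mx1E m (i j : 'I_m.+1) : (1 : 'M[int]_m.+1) i j = ((i : nat) == j)%:R.
Proof. by rewrite !mxE. Qed.

Lemma XmX m k : Xm m ^+ k = \matrix_(i, j) ((i : nat) == (j + k)%N)%:R.
Proof.
elim: k => [|k IH]; apply/matrixP => i j.
  by rewrite expr0 mx1E mxE addn0.
rewrite exprSr IH -mulmxE !mxE.
transitivity (\sum_(l < m.+1 | (l : nat) == j.+1) ((i : nat) == (l + k)%N)%:R : int).
  by rewrite [RHS]big_mkcond; apply: eq_bigr => l _; rewrite !mxE mulb_r.
rewrite (@big_ord1_eq _ 0 +%R (fun l : nat => ((i : nat) == (l + k)%N)%:R : int) j.+1 m.+1); case: ifP => hj; first by rewrite addSnnS.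
suff -> : ((i : nat) == (j + k.+1)%N) = false by [].
apply/eqP => hi; move: (ltn_ord i) hj; rewrite hi; lia.
Qed.

Lemma mulb_l (x : int) (c : bool) : c%:R * x = if c then x else 0.
Proof. by rewrite mulr_natl mulrb. Qed.

Lemma YmX m k : Ym m ^+ k = \matrix_(i, j) ((j : nat) == (i + k)%N)%:R.
Proof.
elim: k => [|k IH]; apply/matrixP => i j.
  by rewrite expr0 mx1E mxE addn0 eq_sym.
rewrite exprSr IH -mulmxE !mxE.
transitivity (\sum_(l < m.+1 | (l : nat) == (i + k)%N) ((j : nat) == l.+1)%:R : int).
  by rewrite [RHS]big_mkcond; apply: eq_bigr => l _; rewrite !mxE mulb_l.
rewrite (@big_ord1_eq _ 0 +%R (fun l : nat => ((j : nat) == l.+1)%:R : int) (i + k) m.+1).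
case: ifP => hj; first by rewrite addnS.
suff -> : ((j : nat) == (i + k.+1)%N) = false by [].
apply/eqP => hi; move: (ltn_ord j) hj; rewrite hi; lia.
Qed.

Lemma Xn m : Xm m ^+ m.+1 = 0.
Proof.
rewrite XmX; apply/matrixP => i j; rewrite !mxE.
suff -> : ((i : nat) == (j + m.+1)%N) = false by [].
apply/eqP => hi; move: (ltn_ord i); rewrite hi; lia.
Qed.

Lemma Yn m : Ym m ^+ m.+1 = 0.
Proof.
rewrite YmX; apply/matrixP => i j; rewrite !mxE.
suff -> : ((j : nat) == (i + m.+1)%N) = false by [].
apply/eqP => hi; move: (ltn_ord j); rewrite hi; lia.
Qed.

Lemma PE m : Ym m ^+ m * Xm m ^+ m = delta_mx 0 0.
Proof.
rewrite XmX YmX -mulmxE; apply/matrixP => r c; rewrite !mxE.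
transitivity (\sum_(l < m.+1 | (l : nat) == (r + m)%N) ((l : nat) == (c + m)%N)%:R : int).
  by rewrite [RHS]big_mkcond; apply: eq_bigr => l _; rewrite !mxE mulb_l.
rewrite (@big_ord1_eq _ 0 +%R (fun l : nat => (l == (c + m)%N)%:R : int) (r + m) m.+1).
case: ifP => hr.
  rewrite eqn_add2r; congr (_%:R).
  have r0 : (r : nat) = 0%N by lia.
  by rewrite -!val_eqE /= r0 eq_sym.
suff -> : (r == 0) = false by [].
by apply/eqP => r0; move: hr; rewrite r0 /=; lia.
Qed.

Lemma bb (x y : bool) : (x%:R * y%:R : int) = (x && y)%:R.
Proof. by case: x; case: y. Qed.

Lemma sum_ind m k (F : nat -> int) : (k < m.+1)%N ->
  \sum_(l < m.+1) (if (l : nat) == k then F l else 0) = F k.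
Proof. by move=> hk; rewrite -big_mkcond (@big_ord1_eq _ 0 +%R F k m.+1) hk. Qed.

Lemma XYE m (r c : 'I_m.+1) :
  (Xm m * Ym m) r c = ((0 < r)%N && ((r : nat) == c))%:R.
Proof.
rewrite -mulmxE mxE.
transitivity (\sum_(l < m.+1) (if (l : nat) == r.-1 then ((0 < r)%N && ((c : nat) == l.+1))%:R else 0 : int)).
  apply: eq_bigr => l _; rewrite !mxE bb.
  have -> : ((r : nat) == l.+1) = ((l : nat) == r.-1) && (0 < r)%N by lia.
  by case: ((l : nat) == r.-1); case: (0 < r)%N.
rewrite (sum_ind (fun l => ((0 < r)%N && ((c : nat) == l.+1))%:R)); last by have := ltn_ord r; lia.
congr (_%:R); lia.
Qed.

Lemma Xrel m : Xm m * Ym m + Ym m ^+ m * Xm m ^+ m = 1.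
Proof.
rewrite PE; apply/matrixP => r c; rewrite mxE XYE mx1E mxE -!val_eqE /=.
case: (eqVneq (r : nat) 0%N) => hr.
  by rewrite hr /= add0r eq_sym.
have -> : (0 < r)%N by lia.
by rewrite /= addr0.
Qed.

Lemma XdY m (i j : 'I_m.+1) : delta_mx i j = Xm m ^+ i * delta_mx 0 0 * Ym m ^+ j.
Proof.
rewrite XmX YmX -!mulmxE; apply/matrixP => r c; rewrite !mxE.
transitivity (\sum_(l < m.+1) (if (l : nat) == 0%N then (((r : nat) == i) && ((c : nat) == (l + j)%N))%:R else 0 : int)).
  by rewrite (sum_ind (fun l => (((r : nat) == i) && ((c : nat) == (l + j)%N))%:R)) // add0n -!val_eqE.
apply: eq_bigr => l _; rewrite !mxE.
transitivity ((\sum_(k < m.+1) (if (k : nat) == 0%N then (((r : nat) == (k + i)%N) && ((l : nat) == 0%N))%:R else 0 : int)) * ((c : nat) == (l + j)%N)%:R).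
  rewrite (sum_ind (fun k => (((r : nat) == (k + i)%N) && ((l : nat) == 0%N))%:R)) // add0n bb; case: ((l : nat) == 0%N); rewrite ?andbF //=.
  by case: ((r : nat) == i); case: ((c : nat) == (l + j)%N).
congr (_ * _); apply: eq_bigr => k _; rewrite !mxE -!val_eqE /= bb.
by case: ((k : nat) == 0%N); rewrite ?andbF.
Qed.

Lemma uniq_fm (R : pzRingType) m (a b : R) (h : {rmorphism 'M[int]_m.+1 -> R}) :
  h (Xm m) = a -> h (Ym m) = b -> forall M, h M = fm a b M.
Proof.
move=> hX hY M.
have hd : forall i j : 'I_m.+1, h (delta_mx i j) = ee m a b i j.
  by move=> i j; rewrite XdY -PE !rmorphM !rmorphXn hX hY /ee /pp !mulrA.
rewrite {1}(matrix_sum_delta M) raddf_sum; apply: eq_bigr => i _.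
rewrite raddf_sum; apply: eq_bigr => j _.
have -> : M i j *: delta_mx i j = delta_mx i j *~ M i j by rewrite -scaler_int intz.
by rewrite raddfMz; congr (_ *~ _); exact: hd.
Qed.


Theorem theorem1 (n : nat) (hn : (2 <= n)%N) :
  exists X Y : 'M[int]_n, @presented_by _ n X Y.
Proof.
case: n hn => [|m] // hn.
exists (Xm m), (Ym m); split; first by split; [exact: Xn | exact: Yn | exact: Xrel].
move=> R a b [ha hb hab]; split.
  pose f := HB.pack_for {rmorphism 'M[int]_m.+1 -> R} (fm a b)
    (GRing.isZmodMorphism.Build _ _ (fm a b) (@fm_zmod R m a b))
    (GRing.isMonoidMorphism.Build _ _ (fm a b) (conj (fm1 ha hab) (fmM ha hb hab))).
  exists f; split; [exact: fmX ha hab | exact: fmY ha hb hab].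
move=> f g fX fY gX gY M.
by rewrite (uniq_fm fX fY) (uniq_fm gX gY).
Qed.
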